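(* Let $S$ be a $\Gamma$-hemiring, let $\mu$ be a fuzzy h-quasi-ideal of $S$ and let $x\in S$. Then $\langle x,\mu\rangle$ is a fuzzy h-quasi-ideal of $S$.
   Context: A $\Gamma$-hemiring is a pair of additive commutative semigroups with zero $S$ and $\Gamma$ with a map $S\times\Gamma\times S\to S$, $(a,\alpha,b)\mapsto a\alpha b$, such that for all $a,b,c\in S$, $\alpha,\beta\in\Gamma$: $(a+b)\alpha c=a\alpha c+b\alpha c$; $a\alpha(b+c)=a\alpha b+a\alpha c$; $a(\alpha+\beta)b=a\alpha b+a\beta b$; $a\alpha(b\beta c)=(a\alpha b)\beta c$; $0\alpha a=0=a\alpha0$; $a0b=0=b0a$. A fuzzy subset is a map $S\to[0,1]$; $\chi_S$ is the constant function $1$. For fuzzy subsets $\mu,\theta$, the generalized h-product is $(\mu\, o_h\,\theta)(x)=\sup\min_{i}\min\{\mu(a_i),\mu(c_i),\theta(b_i),\theta(d_i)\}$, the supremum over all $n\ge1$, $z,a_i,b_i,c_i,d_i\in S$, $\gamma_i,\delta_i\in\Gamma$ with $x+\sum_{i=1}^n a_i\gamma_ib_i+z=\sum_{i=1}^n c_i\delta_id_i+z$, and $(\mu\, o_h\,\theta)(x)=0$ if no such expression exists. A fuzzy subset $\mu$ is a fuzzy h-quasi-ideal if for all $x,y,a,b,z\in S$: $\mu(x+y)\ge\min\{\mu(x),\mu(y)\}$; $x+a+z=b+z$ implies $\mu(x)\ge\min\{\mu(a),\mu(b)\}$; and $\min\{(\mu\,o_h\,\chi_S)(x),(\chi_S\,o_h\,\mu)(x)\}\le\mu(x)$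 for all $x\in S$. The extension of $\mu$ by $x$ is $\langle x,\mu\rangle(y)=\inf_{s\in S,\ \alpha,\gamma\in\Gamma}\mu(x\alpha s\gamma y)$. *)

(* Defs.v *)
From HB Require Import structures.
From mathcomp Require Import all_boot all_order all_algebra.
From mathcomp Require Import boolp classical_sets reals.
Set Implicit Arguments. Unset Strict Implicit. Unset Printing Implicit Defensive.
Import Order.TTheory GRing.Theory Num.Theory.
Local Open Scope ring_scope.
Local Open Scope classical_set_scope.

(* A Gamma-hemiring: S and G are additive commutative monoids (nmodType:
   commutative semigroups with zero), m : S -> G -> S -> S the ternary
   product  m a al b = a al b,  satisfying the axioms of the paper. *)
Definition is_GammaHemiring (S G : nmodType) (m : S -> G -> S -> S) : Prop :=
  [/\ (forall (a b c : S) (al : G), m (a + b) al c = m a al c + m b al c),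
      (forall (a b c : S) (al : G), m a al (b + c) = m a al b + m a al c),
      (forall (a b : S) (al be : G), m a (al + be) b = m a al b + m a be b),
      (forall (a b c : S) (al be : G), m a al (m b be c) = m (m a al b) be c) &
      ((forall (a : S) (al : G), m 0 al a = 0 /\ m a al 0 = 0) /\
       (forall (a b : S), m a 0 b = 0 /\ m b 0 a = 0))].

Definition fuzzy_subset (R : realType) (S : Type) (mu : S -> R) : Prop :=
  forall x, 0 <= mu x <= 1.

Definition chiS (R : realType) (S : Type) : S -> R := fun _ => 1.

Definition hprod_vals (R : realType) (S G : nmodType) (m : S -> G -> S -> S)
  (mu th : S -> R) (x : S) : set R :=
  [set r | exists (n : nat) (z : S) (a b c d : 'I_n -> S) (ga de : 'I_n -> G),
     [/\ (0 < n)%N,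
         x + (\sum_(i < n) m (a i) (ga i) (b i)) + z
           = (\sum_(i < n) m (c i) (de i) (d i)) + z &
         r = \big[Num.min/1]_(i < n)
               Num.min (Num.min (mu (a i)) (mu (c i)))
                       (Num.min (th (b i)) (th (d i)))]].

(* generalized h-product; 0 if no such expression exists *)
Definition hprod (R : realType) (S G : nmodType) (m : S -> G -> S -> S)
  (mu th : S -> R) (x : S) : R :=
  if `[< hprod_vals m mu th x !=set0 >] then sup (hprod_vals m mu th x) else 0.

Definition fuzzy_hquasi_ideal (R : realType) (S G : nmodType)
  (m : S -> G -> S -> S) (mu : S -> R) : Prop :=
  [/\ fuzzy_subset mu,
      (forall x y : S, Num.min (mu x) (mu y) <= mu (x + y)),
      (forall x a b z : S, x + a + z = b + z -> Num.min (mu a) (mu b) <= mu x) &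
      (forall x : S, Num.min (hprod m mu (@chiS R S) x) (hprod m (@chiS R S) mu x)
                     <= mu x)].

Definition extension (R : realType) (S G : nmodType) (m : S -> G -> S -> S)
  (x : S) (mu : S -> R) : S -> R :=
  fun y => inf [set r | exists (s : S) (al ga : G), r = mu (m x al (m s ga y))].

(* Main.v *)
Require Import Defs.
From mathcomp Require Import all_boot all_order all_algebra.
From mathcomp Require Import boolp classical_sets reals.
Set Implicit Arguments. Unset Strict Implicit. Unset Printing Implicit Defensive.
Import Order.TTheory GRing.Theory Num.Theory.
Local Open Scope ring_scope.
Local Open Scope classical_set_scope.

Theorem proposition3p10 (R : realType) (S G : nmodType) (m : S -> G -> S -> S)
  (HS : is_GammaHemiring m) (mu : S -> R) (Hmu : fuzzy_hquasi_ideal m mu) (x : S) :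
  fuzzy_hquasi_ideal m (extension m x mu).
Proof.
case: HS => mDl mDr mGD mA [m0 mG0].
case: Hmu => Hf Hadd Hh Hq.
set E := fun y => [set r | exists (s : S) (al ga : G), r = mu (m x al (m s ga y))].
have En : forall y, E y !=set0.
  by move=> y; exists (mu (m x 0 (m 0 0 y))); exists 0, 0, 0.
have Elb : forall y, has_lbound (E y).
  move=> y; exists 0 => r [s [al [ga ->]]]; by case/andP: (Hf (m x al (m s ga y))).
have extle : forall y s al ga, extension m x mu y <= mu (m x al (m s ga y)).
  move=> y s al ga; rewrite /extension.
  by apply: (ge_inf (Elb y)); exists s, al, ga.
have extge : forall y c, (forall s al ga, c <= mu (m x al (m s ga y))) ->
    c <= extension m x mu y.
  move=> y c Hc; rewrite /extension; apply: lb_le_inf; first exact: En.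
  by move=> r [s [al [ga ->]]]; apply: Hc.
have fD : forall al s ga u v, m x al (m s ga (u + v)) =
    m x al (m s ga u) + m x al (m s ga v).
  by move=> al s ga u v; rewrite mDr mDr.
have f0 : forall al s ga, m x al (m s ga 0) = 0.
  by move=> al s ga; rewrite (proj2 (m0 s ga)) (proj2 (m0 x al)).
have mu0 : forall a, mu a <= mu 0.
  move=> a; have := Hh 0 a a 0; rewrite add0r minxx; apply; done.
split.
- move=> y; apply/andP; split.
    apply: extge => s al ga; by case/andP: (Hf (m x al (m s ga y))).
  apply: le_trans (extle y 0 0 0) _; by case/andP: (Hf (m x 0 (m 0 0 y))).
- move=> y1 y2; apply: extge => s al ga; rewrite fD.
  apply: le_trans (Hadd _ _).
  by rewrite le_min !ge_min !extle ?orbT.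
- move=> y a b z Hyz; apply: extge => s al ga.
  have := congr1 (fun u => m x al (m s ga u)) Hyz; rewrite /= !fD => Hyz'.
  have HH := Hh _ _ _ _ Hyz'.
  have H2 : Num.min (extension m x mu a) (extension m x mu b) <= Num.min (mu (m x al (m s ga a))) (mu (m x al (m s ga b))).
    by rewrite le_min !ge_min !extle ?orbT.
  exact: le_trans H2 HH.
- move=> y; rewrite ge_min; apply/orP; right.
  apply: extge => s al ga.
  rewrite /hprod; case: ifPn => [/asboolP ne|_]; last first.
    by case/andP: (Hf (m x al (m s ga y))).
  apply: ge_sup => // r [n [z [a [b [c [d [gs [ds [n0 Heq ->]]]]]]]]].
  set r0 := \big[Num.min/1]_(i < n) _.
  have rle : forall i : 'I_n, r0 <= Num.min (extension m x mu (b i))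
                                          (extension m x mu (d i)).
    move=> i; rewrite /r0 (bigD1 i) //=.
    rewrite ge_min /chiS minxx; apply/orP; left.
    by rewrite ge_min; apply/orP; right.
  have rP : forall i : 'I_n, r0 <= mu (m x al (m s ga (m (a i) (gs i) (b i)))).
    move=> i; apply: le_trans (rle i) _; rewrite ge_min; apply/orP; left.
    by rewrite (mA s) extle.
  have rC : forall i : 'I_n, r0 <= mu (m x al (m s ga (m (c i) (ds i) (d i)))).
    move=> i; apply: le_trans (rle i) _; rewrite ge_min; apply/orP; right.
    by rewrite (mA s) extle.
  have rz : r0 <= mu 0.
    case: n a b c d gs ds Heq r0 rle rP n0 rC => // n a b c d gs ds Heq r0 rle rP _ _.
    exact: le_trans (rP ord0) (mu0 _).
  have fS : forall F : 'I_n -> S, m x al (m s ga (\sum_(i < n) F i)) =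
       \sum_(i < n) m x al (m s ga (F i)).
    by move=> F; apply: (big_morph _ (fD al s ga) (f0 al s ga)).
  have sumP : forall F : 'I_n -> S, (forall i, r0 <= mu (m x al (m s ga (F i)))) ->
      r0 <= mu (\sum_(i < n) m x al (m s ga (F i))).
    move=> F HF; apply: (big_ind (fun v => r0 <= mu v)) => // u v Hu Hv.
    by apply: le_trans (Hadd u v); rewrite le_min Hu Hv.
  have := congr1 (fun u => m x al (m s ga u)) Heq; rewrite /= !fD !fS => Heq'.
  apply: (le_trans _ (Hh _ _ _ _ Heq')).
  by rewrite le_min !sumP.
Qed.
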